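(* Let $\{v_1,\dots,v_n\}$ be a basis of $\mathbb{C}^n$ and $m_1,\dots,m_n\in\mathbb{R}_+$, and let $\Psi(z)=\max_{1\le j\le n} m_j\log|z\cdot\bar v_j|$ for $z\in\mathbb{D}^n$. Then there exists an orthonormal basis $\{\tilde v_1,\dots,\tilde v_n\}$ of $\mathbb{C}^n$ such that the function $\tilde\Psi(z):=\max_{1\le j\le n} m_j\log|z\cdot\overline{\tilde v_j}|$ satisfies $\tilde\Psi-\Psi\in L^\infty(\mathbb{D}^n)$.
   Context: $\mathbb{D}$ is the unit disk in $\mathbb{C}$. For $z,w\in\mathbb{C}^n$, $z\cdot\bar w=\sum_j z_j\bar w_j$ is the standard Hermitian product. *)

(* Defs.v *)
From HB Require Import structures.
From mathcomp Require Import all_boot all_order all_algebra.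
From mathcomp Require Import complex.
From mathcomp Require Import boolp reals ereal exp.
Set Implicit Arguments. Unset Strict Implicit. Unset Printing Implicit Defensive.
Import Order.TTheory GRing.Theory Num.Theory.
Local Open Scope ring_scope.
Local Open Scope complex_scope.

Section Defs.
Variable R : realType.

Definition hprod (n : nat) (z w : 'rV[R[i]]_n) : R[i] :=
  \sum_(k < n) z 0 k * (w 0 k)^*.

Definition polydisc (n : nat) (z : 'rV[R[i]]_n) : Prop :=
  forall k : 'I_n, `|z 0 k| < 1.

(* log of a nonnegative real, with value -oo at 0; applied to Re `|w| = |w| *)
Definition elog (x : R) : \bar R :=
  if x == 0 then -oo%E else (ln x)%:E.

Definition maxlog (n : nat) (m : 'I_n -> R) (V : 'M[R[i]]_n)
  (z : 'rV[R[i]]_n) : \bar R :=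
  (\big[Order.max/-oo]_(j < n) ((m j)%:E * elog (complex.Re `|hprod z (row j V)|%R)))%E.

Definition orthonormal_rows (n : nat) (W : 'M[R[i]]_n) : Prop :=
  forall i j : 'I_n, hprod (row i W) (row j W) = (i == j)%:R.
End Defs.

(* Main.v *)
Require Import Defs.
From HB Require Import structures.
From mathcomp Require Import all_boot all_order all_algebra.
From mathcomp Require Import complex spectral.
From mathcomp Require Import boolp reals ereal exp.
From mathcomp Require Import lra.
From mathcomp Require Import fingroup perm.
Set Implicit Arguments. Unset Strict Implicit. Unset Printing Implicit Defensive.
Import Order.TTheory GRing.Theory Num.Theory.
Local Open Scope ring_scope.
Local Open Scope complex_scope.

Definition nr (R : realType) (x : R[i]) : R := complex.Re `|x|.

Lemma normE (R : realType) (x : R[i]) : `|x| = (nr x)%:C.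
Proof. by rewrite /nr normc_def. Qed.

Lemma nr_ge0 (R : realType) (x : R[i]) : 0 <= nr x.
Proof. by have := normr_ge0 x; rewrite normE -[0 in X in X -> _]/(0%:C) lecR. Qed.

Lemma nr_eq0 (R : realType) (x : R[i]) : (nr x == 0) = (x == 0).
Proof. by rewrite -[RHS]normr_eq0 normE -[0 in RHS]/(0%:C) (inj_eq (@complexI _)). Qed.

Lemma nrM (R : realType) (x y : R[i]) : nr (x * y) = nr x * nr y.
Proof. by apply: (@complexI R); rewrite -normE normrM !normE rmorphM. Qed.

Lemma nrJ (R : realType) (x : R[i]) : nr (x^*)%C = nr x.
Proof. by apply: (@complexI R); rewrite -!normE normcJ. Qed.

Lemma nr_sum (R : realType) (I : finType) (F : I -> R[i]) :
  nr (\sum_i F i) <= \sum_i nr (F i).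
Proof.
rewrite -lecR -normE rmorph_sum.
apply: le_trans (ler_norm_sum _ _ _) _.
by rewrite le_eqVlt; apply/orP; left; apply/eqP; apply: eq_bigr => i _; rewrite normE.
Qed.

Lemma hprod_sum (R : realType) n (z : 'rV[R[i]]_n) (V : 'M[R[i]]_n) (a : 'I_n -> R[i]) :
  hprod z (\sum_j a j *: row j V) = \sum_j (a j)^* * hprod z (row j V).
Proof.
rewrite /hprod.
under eq_bigr do rewrite summxE rmorph_sum mulr_sumr.
rewrite exchange_big /=; apply: eq_bigr => j _.
rewrite mulr_sumr; apply: eq_bigr => l _.
by rewrite !mxE rmorphM /= mulrCA.
Qed.

Lemma nr_hprod_le (R : realType) n (z v : 'rV[R[i]]_n) : polydisc z ->
  nr (hprod z v) <= \sum_l nr (v 0 l).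
Proof.
move=> hz; apply: le_trans (nr_sum _) _; apply: ler_sum => l _.
rewrite nrM nrJ.
have h1 : nr (z 0 l) <= 1.
  by apply: ltW; rewrite -ltcR -normE; exact: hz.
by rewrite -[X in _ <= X]mul1r ler_wpM2r ?nr_ge0.
Qed.

Definition term (R : realType) n (m : 'I_n -> R) (V : 'M[R[i]]_n) z j : \bar R :=
  ((m j)%:E * elog (nr (hprod z (row j V))))%E.

Lemma maxlog_ge (R : realType) n (m : 'I_n -> R) (V : 'M[R[i]]_n) z j :
  (term m V z j <= maxlog m V z)%E.
Proof. by rewrite /maxlog (bigD1 j) //= le_max lexx. Qed.

Lemma maxlog_le (R : realType) n (m : 'I_n -> R) (V : 'M[R[i]]_n) z (c : \bar R) :
  (forall j, (term m V z j <= c)%E) -> (maxlog m V z <= c)%E.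
Proof.
move=> h; rewrite /maxlog; apply: (big_ind (fun x => x <= c)%E) => //.
  exact: leNye.
- by move=> x y hx hy; rewrite ge_max hx hy.
- by move=> j _; exact: h.
Qed.

Lemma term_fin (R : realType) n (m : 'I_n -> R) (V : 'M[R[i]]_n) z j :
  hprod z (row j V) != 0 ->
  term m V z j = (m j * ln (nr (hprod z (row j V))))%:E.
Proof. by move=> h; rewrite /term /elog nr_eq0 (negbTE h) EFinM. Qed.

Lemma term_0 (R : realType) n (m : 'I_n -> R) (V : 'M[R[i]]_n) z j :
  0 < m j -> hprod z (row j V) = 0 -> term m V z j = (-oo)%E.
Proof.
by move=> mj h; rewrite /term /elog h /nr normr0 /= eqxx gt0_muleNy // lte_fin.
Qed.

Lemma nr0 (R : realType) : nr (0 : R[i]) = 0.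
Proof. by apply/eqP; rewrite nr_eq0. Qed.

Lemma term_bound (R : realType) n (V W : 'M[R[i]]_n) (m : 'I_n -> R) k
    (a : 'I_n -> R[i]) :
  (forall j, 0 < m j) -> row k W = \sum_j a j *: row j V ->
  (forall j, a j != 0 -> m j <= m k) ->
  exists C : R, forall z, polydisc z -> (term m W z k <= maxlog m V z + C%:E)%E.
Proof.
move=> mpos hW ha.
pose K := \sum_j nr (a j).
pose S := \sum_j \sum_l nr (V j l).
pose D := ln (1 + S).
exists (m k * (ln (1 + K) + D)) => z hz.
have [hk0|hk0] := eqVneq (hprod z (row k W)) 0.
  by rewrite term_0 // leNye.
rewrite term_fin //.
pose h := fun j => hprod z (row j V).
have hk : hprod z (row k W) = \sum_j (a j)^* * h j by rewrite hW hprod_sum.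
have [j0 aj0] : exists j0, a j0 != 0.
  apply/existsP; apply: contraNT hk0; rewrite negb_exists => /forallP ha0.
  rewrite hk big1 // => j _; move: (ha0 j); rewrite negbK => /eqP ->.
  by rewrite rmorph0 mul0r.
case: (@arg_maxP _ _ _ j0 (fun j => a j != 0) (fun j => nr (h j)) aj0) => js ajs hmax.
have K0 : 0 <= K by apply: sumr_ge0 => j _; exact: nr_ge0.
have S0 : 0 <= S by apply: sumr_ge0 => j _; apply: sumr_ge0 => l _; exact: nr_ge0.
have hle : nr (hprod z (row k W)) <= (1 + K) * nr (h js).
  rewrite hk; apply: le_trans (nr_sum _) _.
  apply: (@le_trans _ _ (\sum_j nr (a j) * nr (h js))).
    apply: ler_sum => j _; rewrite nrM nrJ.
    have [->|aj] := eqVneq (a j) 0; first by rewrite nr0 !mul0r.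
    by rewrite ler_wpM2l ?nr_ge0 //; exact: hmax.
  rewrite -mulr_suml -/K ler_wpM2r ?nr_ge0 //; lra.
have hpos : 0 < nr (hprod z (row k W)) by rewrite lt0r nr_eq0 hk0 nr_ge0.
have hjs : 0 < nr (h js).
  have := nr_ge0 (h js); rewrite le_eqVlt => /orP[/eqP e|//].
  by move: hle; rewrite -e mulr0 => /(lt_le_trans hpos); rewrite ltxx.
have hjs0 : h js != 0 by rewrite -nr_eq0 gt_eqF.
have Lle : ln (nr (h js)) <= D.
  rewrite /D ler_ln ?posrE //; last by lra.
  apply: le_trans (nr_hprod_le _ hz) _.
  apply: (@le_trans _ _ S); last by lra.
  rewrite /S [X in _ <= X](bigD1 js) //=.
  apply: (@le_trans _ _ (\sum_l nr (V js l))).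
    by apply: ler_sum => l _; rewrite mxE.
  rewrite lerDl.
  by apply: sumr_ge0 => j _; apply: sumr_ge0 => l _; exact: nr_ge0.
have D0 : 0 <= D by apply: ln_ge0; lra.
have lnle : ln (nr (hprod z (row k W))) <= ln (1 + K) + ln (nr (h js)).
  rewrite -lnM ?posrE //; last by lra.
  by rewrite ler_ln ?posrE // ?mulr_gt0 //; lra.
have mjs := ha js ajs.
have mk := mpos k.
have mj := mpos js.
apply: (@le_trans _ _ ((m js * ln (nr (h js)) + m k * (ln (1 + K) + D))%:E)).
  rewrite lee_fin; nra.
by rewrite EFinD leeD2r // -term_fin // maxlog_ge.
Qed.

Lemma maxlog_bound (R : realType) n (V W : 'M[R[i]]_n) (m : 'I_n -> R) :
  (forall j, 0 < m j) ->
  (forall k, exists a : 'I_n -> R[i], row k W = \sum_j a j *: row j V /\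
       forall j, a j != 0 -> m j <= m k) ->
  exists C : R, 0 <= C /\ forall z, polydisc z ->
    (maxlog m W z <= maxlog m V z + C%:E)%E.
Proof.
move=> mpos hk.
have : forall k, exists C : R, forall z, polydisc z ->
    (term m W z k <= maxlog m V z + C%:E)%E.
  move=> k; have [a [h1 h2]] := hk k; exact: term_bound mpos h1 h2.
case/fin_all_exists => Cf hCf.
exists (\sum_k `|Cf k|); split; first by apply: sumr_ge0 => k _.
move=> z hz; apply: maxlog_le => k.
apply: le_trans (hCf k z hz) _; apply: leeD2l; rewrite lee_fin.
apply: le_trans (ler_norm _) _.
by rewrite (bigD1 k) //= lerDl; apply: sumr_ge0 => j _.
Qed.

Lemma maxlog_ltoo (R : realType) n (m : 'I_n -> R) (V : 'M[R[i]]_n) z :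
  (forall j, 0 < m j) -> (maxlog m V z < +oo)%E.
Proof.
move=> mpos; rewrite /maxlog; apply: (big_ind (fun x => x < +oo)%E) => //.
- by move=> x y hx hy; rewrite gt_max hx hy.
- move=> j _; have [h|h] := eqVneq (hprod z (row j V)) 0.
    by move: (term_0 (mpos j) h); rewrite /term => ->.
  by move: (term_fin m h); rewrite /term => ->; exact: ltry.
Qed.

Lemma ereal_final (R : realType) (x y : \bar R) (C1 C2 : R) :
  0 <= C1 -> 0 <= C2 ->
  (-oo < x)%E -> (x < +oo)%E -> (y < +oo)%E ->
  (x <= y + C1%:E)%E -> (y <= x + C2%:E)%E ->
  (`| x - y | <= (C1 + C2)%:E)%E.
Proof.
move=> c1 c2 hx1 hx2 hy; case: x hx1 hx2 => [r| |] // _ _.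
case: y hy => [s| |] // _.
- rewrite -!EFinD !lee_fin => h1 h2.
  rewrite ler_norml; apply/andP; split; lra.

Qed.

Definition mlow (R : realType) n (m : 'I_n -> R) (B : 'M[R[i]]_n) :=
  forall i j, B i j != 0 -> m j <= m i.

Lemma mlowD (R : realType) n (m : 'I_n -> R) (A B : 'M[R[i]]_n) :
  mlow m A -> mlow m B -> mlow m (A + B).
Proof.
move=> hA hB i j; rewrite mxE.
have [/eqP a0|a0] := eqVneq (A i j) 0; last by move=> _; exact: hA.
by rewrite (eqP a0) add0r; exact: hB.
Qed.

Lemma mlowM (R : realType) n (m : 'I_n -> R) (A B : 'M[R[i]]_n) :
  mlow m A -> mlow m B -> mlow m (A *m B).
Proof.
move=> hA hB i j; rewrite mxE => h.
have [k /andP [_ hk]] : exists k, true && (A i k * B k j != 0).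
  apply/existsP; apply: contraNT h; rewrite negb_exists => /forallP h0.
  by rewrite big1 // => k _; move: (h0 k); rewrite negbK => /eqP.
move: hk; rewrite mulf_eq0 negb_or => /andP [h1 h2].
exact: le_trans (hB _ _ h2) (hA _ _ h1).
Qed.

Lemma mlowC (R : realType) n (m : 'I_n -> R) (c : R[i]) :
  mlow m (c%:M : 'M[R[i]]_n).
Proof.
move=> i j; rewrite mxE; have [->|] := eqVneq i j; first by rewrite lexx.
by rewrite mulr0n eqxx.
Qed.

Lemma mlowZ (R : realType) n (m : 'I_n -> R) (c : R[i]) (A : 'M[R[i]]_n) :
  mlow m A -> mlow m (c *: A).
Proof.
move=> hA i j; rewrite mxE mulf_eq0 negb_or => /andP [_ h]; exact: hA.
Qed.

Lemma mlow_horner (R : realType) n (m : 'I_n.+1 -> R) (B : 'M[R[i]]_n.+1) p :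
  mlow m B -> mlow m (horner_mx B p).
Proof.
move=> hB; elim/poly_ind: p => [|p c IH].
  by rewrite rmorph0 -(scale0r (1%:M)) scalemx1; exact: mlowC.
rewrite rmorphD rmorphM /= horner_mx_X horner_mx_C -mulmxE.
by apply: mlowD; [exact: mlowM | exact: mlowC].
Qed.

Lemma horner_split (R : realType) n (B : 'M[R[i]]_n.+1) p :
  exists q, horner_mx B p = (p`_0)%:M + horner_mx B q *m B.
Proof.
elim/poly_ind: p => [|p c [q IH]].
  by exists 0; rewrite !rmorph0 coef0 mul0mx addr0 -(scale0r (1%:M)) scalemx1.
exists p; rewrite rmorphD rmorphM /= horner_mx_X horner_mx_C -mulmxE.
by rewrite coefD coefMX coefC /= add0r addrC.
Qed.

Lemma mlow_inv (R : realType) n (m : 'I_n.+1 -> R) (B : 'M[R[i]]_n.+1) :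
  B \in unitmx -> mlow m B -> mlow m (invmx B).
Proof.
move=> Bu hB.
have [q hq] := horner_split B (char_poly B).
set c0 := (char_poly B)`_0 in hq.
have c0n : c0 != 0.
  rewrite /c0 char_poly_det mulf_eq0 negb_or signr_eq0 /=.
  by rewrite -unitfE -unitmxE.
have e : (- c0^-1 *: horner_mx B q) *m B = 1%:M.
  rewrite -scalemxAl; move: hq; rewrite Cayley_Hamilton => /eqP.
  rewrite eq_sym addrC addr_eq0 => /eqP ->.
  rewrite scalerN scaleNr opprK -[c0%:M]scalemx1 scalerA mulVf //.
  by rewrite scale1r.
have -> : invmx B = - c0^-1 *: horner_mx B q.
  by rewrite -[RHS](mulmxK Bu) e mul1mx.
by apply: mlowZ; apply: mlow_horner.
Qed.

Local Open Scope sesquilinear_scope.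

Lemma hprod_dot (R : realType) n (u v : 'rV[R[i]]_n) : hprod u v = dotmx u v.
Proof.
rewrite dotmxE /hprod !mxE; apply: eq_bigr => k _; rewrite !mxE //.
Qed.

Lemma orth_unitary (R : realType) n (W : 'M[R[i]]_n) :
  orthonormal_rows W <-> W \is unitarymx.
Proof.
split.
  by move=> h; apply/row_unitarymxP => i j; rewrite -hprod_dot h.
by move/row_unitarymxP => h i j; rewrite hprod_dot h.
Qed.

Lemma unitary_nz (R : realType) n (W : 'M[R[i]]_n) (z : 'rV[R[i]]_n) :
  orthonormal_rows W -> z != 0 -> exists k, hprod z (row k W) != 0.
Proof.
move=> /orth_unitary /unitarymxP hW hz.
apply/existsP; apply: contraNT hz; rewrite negb_exists => /forallP h0.
have e : z *m W ^t* = 0.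
  apply/rowP => k; rewrite !mxE; move: (h0 k); rewrite negbK => /eqP h1.
  rewrite -[RHS]h1.
  by rewrite /hprod; apply: eq_bigr => l _; rewrite !mxE.
have hW' := mulmx1C hW.
by rewrite -[z]mulmx1 -hW' mulmxA e mul0mx.
Qed.

Lemma exists_W (R : realType) n (V : 'M[R[i]]_n.+1) (m : 'I_n.+1 -> R) :
  row_free V ->
  exists W : 'M[R[i]]_n.+1, orthonormal_rows W /\
    (forall k, exists a : 'I_n.+1 -> R[i], row k W = \sum_j a j *: row j V /\
       forall j, a j != 0 -> m j <= m k) /\
    (forall k, exists a : 'I_n.+1 -> R[i], row k V = \sum_j a j *: row j W /\
       forall j, a j != 0 -> m j <= m k).
Proof.
move=> Vfree.
pose r := fun i j : 'I_n.+1 => m i <= m j.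
pose s := sort r (enum 'I_n.+1).
have ss : size s = n.+1 by rewrite size_sort size_enum_ord.
have us : uniq s by rewrite sort_uniq enum_uniq.
have sorted_s : sorted r s.
  by apply: sort_sorted => i j; rewrite /r; exact: le_total.
pose f := fun k : 'I_n.+1 => nth ord0 s k.
have finj : injective f.
  move=> k l /eqP; rewrite /f nth_uniq ?ss ?ltn_ord // => /eqP; exact: val_inj.
pose σ := perm finj.
have σmono (k l : 'I_n.+1) : (k <= l)%N -> m (σ k) <= m (σ l).
  rewrite !permE /f => hkl.
  apply: (sorted_leq_nth (leT := r) _ _ ord0 sorted_s) => //.
  - by move=> y x z; rewrite /r => h1 h2; exact: le_trans h1 h2.
  - by move=> x; rewrite /r lexx.
  - by rewrite inE ss ltn_ord.
  - by rewrite inE ss ltn_ord.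
pose A0 := \matrix_(k, l) V (σ k) l.
pose S := schmidt A0.
pose W := \matrix_(j, l) S ((σ^-1)%g j) l.
have rowW j : row j W = row ((σ^-1)%g j) S by apply/rowP => l; rewrite !mxE.
have Wo : orthonormal_rows W.
  move=> i j; rewrite !rowW hprod_dot.
  have /row_unitarymxP -> := schmidt_unitarymx A0 (leqnn _).
  by rewrite (inj_eq (@perm_inj _ _)).
have VW : forall k, exists a : 'I_n.+1 -> R[i],
    row k V = \sum_j a j *: row j W /\ forall j, a j != 0 -> m j <= m k.
  move=> k; pose k' := (σ^-1)%g k.
  have rowA : row k V = row k' A0 by apply/rowP => l; rewrite !mxE /k' permKV.
  have := row_schmidt_sub A0 k'; rewrite -/S => /sub_sumsmxP [u hu].
  have hc : forall l, exists c, u l *m <<row l S>>%MS = c *: row l S.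
    move=> l; have : (u l *m <<row l S>> <= <<row l S>>)%MS := submxMl _ _.
    rewrite genmxE => /submxP [D ->]; exists (D 0 0).
    by rewrite {1}[D]mx11_scalar mul_scalar_mx.
  case/fin_all_exists: hc => c hc.
  exists (fun j => if ((σ^-1)%g j <= k')%N then c ((σ^-1)%g j) else 0); split.
    rewrite rowA hu [RHS](reindex_inj (@perm_inj _ σ)) /= big_mkcond /=.
    apply: eq_bigr => l _; rewrite permK rowW permK hc.
    by case: ifP => //; rewrite scale0r.
  move=> j; case: ifP => hj; last by rewrite eqxx.
  by move=> _; have := σmono _ _ hj; rewrite permKV /k' permKV.
case/fin_all_exists: VW => b hb.
pose B := \matrix_(k, j) b k j.
have VB : V = B *m W.
  apply/row_matrixP => k; rewrite row_mul mulmx_sum_row (proj1 (hb k)).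
  by apply: eq_bigr => j _; rewrite !mxE.
have Blow : mlow m B by move=> k j; rewrite mxE; exact: (proj2 (hb k)).
have Bu : B \in unitmx.
  rewrite -row_free_unit /row_free eqn_leq rank_leq_row /=.
  by have := mxrankM_maxl B W; rewrite -VB (eqP Vfree).
have WB : W = invmx B *m V by rewrite VB mulKmx.
exists W; split => //; split; last first.
  by move=> k; exists (b k); exact: hb k.
move=> k; exists (fun j => invmx B k j); split.
  by rewrite [in LHS]WB row_mul mulmx_sum_row; apply: eq_bigr => j _; rewrite !mxE.
by move=> j; apply: mlow_inv.
Qed.

Local Close Scope sesquilinear_scope.
Local Close Scope complex_scope.
Unset Implicit Arguments.

Theorem lemma2p4 (R : realType) (n : nat) (V : 'M[R[i]]_n) (m : 'I_n -> R) :
  row_free V -> (forall j, 0 < m j) ->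
  exists W : 'M[R[i]]_n,
    orthonormal_rows W /\
    exists C : R, forall z : 'rV[R[i]]_n, polydisc z -> z != 0 ->
      (`| maxlog m W z - maxlog m V z | <= C%:E)%E.
Proof.
case: n V m => [|n] V m Vfree mpos.
  exists V; split; first by move=> [].
  by exists 0 => z _ /negP []; apply/eqP/matrixP => i [] [].
have [W [Wo [hWV hVW]]] := exists_W m Vfree.
have [C1 [C1p h1]] := maxlog_bound mpos hWV.
have [C2 [C2p h2]] := maxlog_bound mpos hVW.
exists W; split => //; exists (C1 + C2) => z hz z0.
apply: ereal_final => //; try exact: maxlog_ltoo.
- have [k hk] := unitary_nz Wo z0.
  apply: lt_le_trans (maxlog_ge m W z k).
  by rewrite term_fin //; exact: ltNyr.
- exact: h1.
- exact: h2.
Qed.
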